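(* Let $\mathcal{A}\in\mathbb{R}^{n_1\times n_2\times n_3}$ be nonzero, and let $\mathcal{A}=\mathcal{U}*\mathcal{S}*\mathcal{V}^*$ be its t-SVD, with singular values in each Fourier-domain slice ordered nonincreasingly, so that $\mathcal{S}(1,1,:)\neq 0$. Define the rank-one tensor $$\mathcal{M}_1=\mathcal{U}(:,1,:)*\frac{\mathcal{S}(1,1,:)}{\|\mathcal{S}(1,1,:)\|_F}*\mathcal{V}(:,1,:)^*.$$ Then $$\langle \mathcal{M}_1,\mathcal{A}\rangle\;\ge\;\frac{\|\mathcal{A}\|_F}{\sqrt{\min(n_1,n_2)}}.$$
   Context: For $\mathcal{A}\in\mathbb{R}^{n_1\times n_2\times n_3}$, $\hat{\mathcal{A}}$ denotes the discrete Fourier transform of $\mathcal{A}$ along the third dimension (applied to every tube $\mathcal{A}(i,j,:)$), with frontal slices $\hat A^{(k)}=\hat{\mathcal{A}}(:,:,k)$. The t-product $\mathcal{A}*\mathcal{B}$ of $\mathcal{A}\in\mathbb{R}^{n_1\times n_2\times n_3}$ and $\mathcal{B}\in\mathbb{R}^{n_2\times l\times n_3}$ is the $n_1\times l\times n_3$ tensor whose Fourier-domain frontal slices are the matrix products $\hat A^{(k)}\hat B^{(k)}$, $k=1,\dots,n_3$ (equivalently, fold(bcirc($\mathcal{A}$)·unfold($\mathcal{B}$))). The conjugate transpose $\mathcal{A}^*$ is obtained by conjugate-transposing each frontal slice and reversing the order of frontal slices $2,\dots,n_3$. A tensor is f-diagonal if each frontal slice is diagonal. The t-SVD is $\mathcal{A}=\mathcal{U}*\mathcal{S}*\mathcal{V}^*$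 with $\mathcal{U},\mathcal{V}$ orthogonal ($\mathcal{Q}^**\mathcal{Q}=\mathcal{Q}*\mathcal{Q}^*=\mathcal{I}$, where $\mathcal{I}$ has the identity as first frontal slice and zero elsewhere) and $\mathcal{S}$ f-diagonal; it is obtained from SVDs $\hat A^{(k)}=\hat U^{(k)}\hat S^{(k)}\hat V^{(k)*}$ of the Fourier slices, with the diagonal entries of each $\hat S^{(k)}$ in nonincreasing order. $\langle\cdot,\cdot\rangle$ is the entrywise (Frobenius) inner product and $\|\cdot\|_F$ its norm. *)

(* Defs.v *)
From HB Require Import structures.
From mathcomp Require Import all_boot all_order all_algebra.
From mathcomp Require Import complex reals trigo.
Set Implicit Arguments. Unset Strict Implicit. Unset Printing Implicit Defensive.
Import Order.TTheory GRing.Theory Num.Theory.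
Local Open Scope ring_scope.

(* A third-order tensor of size n1 x n2 x n3 (indices are 0-based). *)
Definition tensor (T : Type) (n1 n2 n3 : nat) := 'I_n1 -> 'I_n2 -> 'I_n3 -> T.

Definition osub (n : nat) (k t : 'I_n) : 'I_n :=
  Ordinal (ltn_pmod (k + n - t) (leq_ltn_trans (leq0n k) (ltn_ord k))).

Definition oneg (n : nat) (k : 'I_n) : 'I_n :=
  Ordinal (ltn_pmod (n - k) (leq_ltn_trans (leq0n k) (ltn_ord k))).

(* t-product: fold(bcirc(A) * unfold(B)); frontal slice k of A*B is
   sum_t A^(k - t mod n3) B^(t). *)
Definition tprod (R : pzRingType) (n1 n2 l n3 : nat)
  (A : tensor R n1 n2 n3) (B : tensor R n2 l n3) : tensor R n1 l n3 :=
  fun i j k => \sum_(p < n2) \sum_(t < n3) A i p (osub k t) * B p j t.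

(* conjugate transpose of a real tensor: transpose each frontal slice and
   reverse the order of frontal slices 2..n3 (0-based: slice k -> slice -k). *)
Definition tconj (R : Type) (n1 n2 n3 : nat) (A : tensor R n1 n2 n3)
  : tensor R n2 n1 n3 :=
  fun j i k => A i j (oneg k).

Definition tid (R : pzRingType) (n n3 : nat) : tensor R n n n3 :=
  fun i j k => ((i == j) && (val k == 0%N))%:R.

Definition torthogonal (R : pzRingType) (n n3 : nat) (Q : tensor R n n n3) :=
  (forall i j k, tprod (tconj Q) Q i j k = @tid R n n3 i j k) /\
  (forall i j k, tprod Q (tconj Q) i j k = @tid R n n3 i j k).

Definition fdiag (R : pzRingType) (n1 n2 n3 : nat) (S : tensor R n1 n2 n3) :=
  forall i j k, val i <> val j -> S i j k = 0.

(* omega = exp(-2 pi i / n3) *)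
Definition omega (R : realType) (n3 : nat) : R[i] :=
  Complex (cos (2 * pi / n3%:R)) (- sin (2 * pi / n3%:R)).

Definition tdft (R : realType) (n1 n2 n3 : nat) (A : tensor R n1 n2 n3)
  : tensor R[i] n1 n2 n3 :=
  fun i j k => \sum_(t < n3) Complex (A i j t) 0 * omega R n3 ^+ (k * t).

Definition tinner (R : pzRingType) (n1 n2 n3 : nat) (A B : tensor R n1 n2 n3) : R :=
  \sum_(i < n1) \sum_(j < n2) \sum_(k < n3) A i j k * B i j k.

Definition tfro (R : rcfType) (n1 n2 n3 : nat) (A : tensor R n1 n2 n3) : R :=
  Num.sqrt (tinner A A).

(* t-SVD A = U * S * V^*: U, V orthogonal, S f-diagonal, and in every
   Fourier-domain frontal slice the diagonal entries of hat S (the singular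
   values of hat A^(k)) are real, nonnegative and nonincreasing. *)
Definition tSVD (R : realType) (n1 n2 n3 : nat) (A : tensor R n1 n2 n3)
  (U : tensor R n1 n1 n3) (S : tensor R n1 n2 n3) (V : tensor R n2 n2 n3) :=
  [/\ torthogonal U, torthogonal V, fdiag S,
      (forall i j k, A i j k = tprod (tprod U S) (tconj V) i j k) &
   (
      (forall (i : 'I_n1) (j : 'I_n2) k, val i = val j -> 0 <= tdft S i j k) /\
      (forall (i i' : 'I_n1) (j j' : 'I_n2) k,
          val i = val j -> val i' = val j' -> (val i <= val i')%N ->
          tdft S i' j' k <= tdft S i j k))].

Definition lslice (T : Type) (n m n3 : nat) (Q : tensor T n m n3) (c : 'I_m)
  : tensor T n 1 n3 := fun i _ k => Q i c k.

Definition ttube (T : Type) (n1 n2 n3 : nat) (A : tensor T n1 n2 n3)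
  (i : 'I_n1) (j : 'I_n2) : tensor T 1 1 n3 := fun _ _ k => A i j k.

(* Main.v *)
Require Import Defs.
From HB Require Import structures.
From mathcomp Require Import all_boot all_order all_algebra.
From mathcomp Require Import complex reals trigo.
From mathcomp Require Import ring lra zify.
From Stdlib Require Import FunctionalExtensionality.
Import Order.TTheory GRing.Theory Num.Theory.
Local Open Scope ring_scope.
Lemma osubE m (k t : 'I_m.+1) : osub k t = (k - t)%R.
Proof. apply: val_inj => /=. rewrite modnDmr addnBA //. exact: ltnW. Qed.
Lemma onegE m (k : 'I_m.+1) : oneg k = (- k)%R.
Proof. by apply: val_inj. Qed.

Section T.
Variable R : comPzRingType.
Variable m : nat.
Local Notation N := m.+1.

Lemma tprodE n1 n2 l (X : tensor R n1 n2 N) (Y : tensor R n2 l N) i j k :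
  tprod X Y i j k = \sum_(p < n2) \sum_(t < N) X i p (k - t)%R * Y p j t.
Proof. by apply: eq_bigr => p _; apply: eq_bigr => t _; rewrite osubE. Qed.

Lemma tprodA n1 n2 n3 n4 (X : tensor R n1 n2 N) (Y : tensor R n2 n3 N)
  (Z : tensor R n3 n4 N) i j k :
  tprod (tprod X Y) Z i j k = tprod X (tprod Y Z) i j k.
Proof.
rewrite !tprodE.
transitivity (\sum_(p < n2) \sum_(q < n3) \sum_(t < N) \sum_(s < N)
   X i p (k - (s + t))%R * Y p q s * Z q j t).
  under eq_bigr do under eq_bigr do rewrite tprodE big_distrl /=.
  under eq_bigr do rewrite exchange_big /=.
  rewrite exchange_big /=.
  apply: eq_bigr => p _; apply: eq_bigr => q _; apply: eq_bigr => t _.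
  rewrite big_distrl /=; apply: eq_bigr => s _.
  by rewrite [s + t]addrC opprD addrA.
apply: eq_bigr => p _; symmetry.
under eq_bigr do rewrite tprodE big_distrr /=.
under eq_bigr do under eq_bigr do rewrite big_distrr /=.
rewrite exchange_big /=; apply: eq_bigr => q _.
rewrite exchange_big /=; apply: eq_bigr => t _.
rewrite (reindex_inj (addIr t)) /=.
apply: eq_bigr => s _.
by rewrite addrK mulrA.
Qed.

Lemma tprodAf n1 n2 n3 n4 (X : tensor R n1 n2 N) (Y : tensor R n2 n3 N)
  (Z : tensor R n3 n4 N) :
  tprod (tprod X Y) Z = tprod X (tprod Y Z).
Proof.
apply: functional_extensionality => i; apply: functional_extensionality => j.
apply: functional_extensionality => k; exact: tprodA.
Qed.

Lemma tinnerR n1 n2 l (X : tensor R n1 n2 N) (Y : tensor R n2 l N)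
  (Z : tensor R n1 l N) :
  tinner (tprod X Y) Z = tinner X (tprod Z (tconj Y)).
Proof.
rewrite /tinner; apply: eq_bigr => i _.
transitivity (\sum_(p < n2) \sum_(j < l) \sum_(t < N) \sum_(u < N)
   X i p u * Y p j t * Z i j (u + t)%R).
  under eq_bigr do under eq_bigr do rewrite tprodE big_distrl /=.
  under eq_bigr do rewrite exchange_big /=.
  rewrite exchange_big /=; apply: eq_bigr => p _; apply: eq_bigr => j _.
  under eq_bigr do rewrite big_distrl /=.
  rewrite exchange_big /=; apply: eq_bigr => t _.
  rewrite (reindex_inj (addIr t)) /=; apply: eq_bigr => u _.
  by rewrite addrK.
symmetry; apply: eq_bigr => p _.
under eq_bigr do rewrite tprodE big_distrr /=.
rewrite exchange_big /=; apply: eq_bigr => j _.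
under eq_bigr do rewrite big_distrr /=.
rewrite exchange_big /=.
rewrite (reindex_inj (@oppr_inj _)) /=; apply: eq_bigr => t _.
apply: eq_bigr => u _.
rewrite /tconj onegE !opprK.
by rewrite [Z _ _ _ * _]mulrC mulrA.
Qed.

Lemma tinnerL n1 n2 l (X : tensor R n1 n2 N) (Y : tensor R n2 l N)
  (Z : tensor R n1 l N) :
  tinner (tprod X Y) Z = tinner Y (tprod (tconj X) Z).
Proof.
rewrite /tinner.
transitivity (\sum_(p < n2) \sum_(j < l) \sum_(t < N) \sum_(i < n1) \sum_(k < N)
   X i p (k - t)%R * Y p j t * Z i j k).
  under eq_bigr do under eq_bigr do under eq_bigr do rewrite tprodE big_distrl /=.
  under eq_bigr do under eq_bigr do rewrite exchange_big /=.
  under eq_bigr do rewrite exchange_big /=.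
  rewrite exchange_big /=; apply: eq_bigr => p _.
  rewrite exchange_big /=; apply: eq_bigr => j _.
  under eq_bigr do under eq_bigr do rewrite big_distrl /=.
  under eq_bigr do rewrite exchange_big /=.
  by rewrite exchange_big.
apply: eq_bigr => p _; apply: eq_bigr => j _; apply: eq_bigr => t _.
rewrite tprodE big_distrr /=; apply: eq_bigr => i _.
rewrite big_distrr /=; apply: eq_bigr => k _.
by rewrite /tconj onegE opprB mulrCA mulrA.
Qed.

Lemma val0N : val (0 : 'I_N) = 0%N. Proof. by []. Qed.

Lemma tprod_id n1 n2 (X : tensor R n1 n2 N) i j k :
  tprod X (@tid R n2 N) i j k = X i j k.
Proof.
rewrite tprodE (bigD1 j) //= [X in _ + X]big1 ?addr0; last first.
  move=> p /negbTE pj; apply: big1 => t _.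
  by rewrite /tid pj /= mulr0.
rewrite (bigD1 0) //= [X in _ + X]big1 ?addr0; last first.
  move=> t /negbTE t0; rewrite /tid eqxx /=.
  have -> : (val t == 0%N) = false by rewrite -val0N val_eqE t0.
  by rewrite mulr0.
by rewrite /tid eqxx /= subr0 mulr1.
Qed.

Lemma tid_prod n1 n2 (X : tensor R n1 n2 N) i j k :
  tprod (@tid R n1 N) X i j k = X i j k.
Proof.
rewrite tprodE (bigD1 i) //= [X in _ + X]big1 ?addr0; last first.
  move=> p /negbTE pj; apply: big1 => t _.
  by rewrite /tid eq_sym pj /= mul0r.
rewrite (bigD1 k) //= [X in _ + X]big1 ?addr0; last first.
  move=> t /negbTE t0; rewrite /tid eqxx /=.
  have -> : (val (k - t) == 0%N) = false.
    by rewrite -val0N val_eqE subr_eq0 eq_sym t0.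
  by rewrite mul0r.
by rewrite subrr /tid eqxx /= mul1r.
Qed.

Lemma tconjK n1 n2 (X : tensor R n1 n2 N) : tconj (tconj X) = X.
Proof.
rewrite /tconj; apply: functional_extensionality => i.
apply: functional_extensionality => j; apply: functional_extensionality => k.
by rewrite !onegE opprK.
Qed.
End T.

Section F.
Variable R : realType.
Variable m : nat.
Local Notation N := m.+1.
Local Notation w := (omega R N).
Let th : R := 2 * pi / N%:R.

Lemma omegaX d : w ^+ d = Complex (cos (d%:R * th)) (- sin (d%:R * th)).
Proof.
elim: d => [|d IH]; first by rewrite expr0 mul0r cos0 sin0 oppr0.
rewrite exprSr IH /omega -/th /=.
simpc. rewrite -nat1r mulrDl mul1r cosD sinD. by congr Complex; ring. Qed.


Lemma N_gt0 : (0 : R) < N%:R. Proof. by rewrite ltr0n. Qed.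

Lemma omegaN : w ^+ N = 1.
Proof.
rewrite omegaX /th mulrCA mulrC divff ?mul1r; last by rewrite lt0r_neq0 // N_gt0.
by rewrite mulr_natl cos2pi sin2pi oppr0.
Qed.

Lemma omega_neq1 d : (0 < d < N)%N -> w ^+ d != 1.
Proof.
move=> /andP [d0 dN]; rewrite omegaX.
set x := d%:R * th.
have hx : 0 < x / 2 < pi.
  have N0 := N_gt0.
  have -> : x / 2 = (d%:R / N%:R) * pi.
    by rewrite /x /th; field; rewrite addrC natr1 pnatr_eq0.
  have h1 : 0 < d%:R / N%:R :> R by rewrite divr_gt0 // ltr0n.
  have h2 : d%:R / N%:R < 1 :> R by rewrite ltr_pdivrMr // mul1r ltr_nat.
  have hp : 0 < pi :> R := pi_gt0 R.
  set q := d%:R / N%:R in h1 h2 *.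
  apply/andP; split; nra.
have hs := sin_gt0_pi hx.
have hc : cos x < 1.
  have -> : x = x / 2 + x / 2 by rewrite -splitr.
  rewrite cosD -!expr2 cos2sin2.
  have : 0 < sin (x / 2) ^+ 2 by rewrite exprn_gt0.
  rewrite expr2; nra.
apply/negP => /eqP [] hc1 _.
by move: hc; rewrite hc1 ltxx.
Qed.

Lemma omegaJ : w * conjc w = 1.
Proof.
rewrite /omega /conjc; simpc.
rewrite -!expr2 cos2Dsin2 mulrC subrr.
by [].
Qed.

Lemma geo0 (z : R[i]) : z ^+ N = 1 -> z != 1 -> \sum_(k < N) z ^+ k = 0.
Proof.
move=> hz hz1; have := subrX1 z N; rewrite hz subrr => /esym /eqP.
by rewrite mulf_eq0 subr_eq0 (negbTE hz1) /= => /eqP.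
Qed.

Lemma ortho (t s : 'I_N) :
  \sum_(k < N) w ^+ (k * t) * conjc w ^+ (k * s) = ((t == s) * N)%:R.
Proof.
have hJ := omegaJ.
case: (ltngtP t s) => hts.
- have -> : (t == s) = false by apply/negbTE; rewrite neq_ltn hts.
  rewrite mul0n.
  transitivity (\sum_(k < N) conjc ((w ^+ (s - t)) ^+ k)).
    apply: eq_bigr => k _.
    have -> : (k * s = k * (s - t) + k * t)%N by rewrite -mulnDr subnK // ltnW.
    rewrite exprD mulrCA -exprMn hJ expr1n mulr1.
    by rewrite !rmorphXn -exprM mulnC.
  rewrite -rmorph_sum geo0 ?rmorph0 //.
    by rewrite -exprM mulnC exprM omegaN expr1n.
  by apply: omega_neq1; rewrite subn_gt0 hts /= (leq_ltn_trans (leq_subr _ _)).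
- have -> : (t == s) = false by apply/negbTE; rewrite neq_ltn hts orbT.
  rewrite mul0n.
  transitivity (\sum_(k < N) ((w ^+ (t - s)) ^+ k)).
    apply: eq_bigr => k _.
    have -> : (k * t = k * (t - s) + k * s)%N by rewrite -mulnDr subnK // ltnW.
    rewrite exprD -mulrA -exprMn hJ expr1n mulr1.
    by rewrite -exprM mulnC.
  rewrite geo0 //.
    by rewrite -exprM mulnC exprM omegaN expr1n.
  by apply: omega_neq1; rewrite subn_gt0 hts /= (leq_ltn_trans (leq_subr _ _)).
- have ets : t = s by apply: val_inj.
  rewrite ets eqxx mul1n.
  under eq_bigr do rewrite -exprMn hJ expr1n.
  by rewrite sumr_const card_ord.
Qed.

Definition dft (a : 'I_N -> R) (k : 'I_N) : R[i] :=
  \sum_(t < N) Complex (a t) 0 * w ^+ (k * t).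

Lemma parseval (a : 'I_N -> R) :
  \sum_(k < N) dft a k * conjc (dft a k) = ((N%:R * \sum_(t < N) a t ^+ 2)%:C)%C.
Proof.
transitivity (\sum_(t < N) \sum_(s < N) Complex (a t) 0 * Complex (a s) 0 *
   \sum_(k < N) w ^+ (k * t) * conjc w ^+ (k * s)).
  under eq_bigr do rewrite /dft rmorph_sum big_distrl /=.
  under eq_bigr do under eq_bigr do rewrite big_distrr /=.
  rewrite exchange_big /=; apply: eq_bigr => t _.
  rewrite exchange_big /=; apply: eq_bigr => s _.
  rewrite big_distrr /=; apply: eq_bigr => k _.
  rewrite rmorphM rmorphXn /= oppr0.
  rewrite -!mulrA; congr (_ * _); rewrite mulrCA; congr (_ * _).
transitivity (\sum_(t < N) Complex (a t) 0 * Complex (a t) 0 * N%:R).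
  apply: eq_bigr => t _.
  rewrite (bigD1 t) //= [X in _ + X]big1 ?addr0; last first.
    by move=> s /negbTE ts; rewrite ortho eq_sym ts mul0n mulr0.
  by rewrite ortho eqxx mul1n.
rewrite rmorphM rmorph_sum /= mulr_sumr; apply: eq_bigr => t _.
by rewrite rmorph_nat rmorphXn mulrC expr2.
Qed.

Lemma conj_ge0 (z : R[i]) : 0 <= z -> conjc z = z.
Proof. move=> hz; have := ger0_Im hz; case: z {hz} => a b /= ->; by rewrite oppr0. Qed.

Lemma dft_le (a b : 'I_N -> R) :
  (forall k, 0 <= dft a k) -> (forall k, dft a k <= dft b k) ->
  \sum_(t < N) a t ^+ 2 <= \sum_(t < N) b t ^+ 2.
Proof.
move=> h0 h1.
have : \sum_(k < N) dft a k * conjc (dft a k) <= \sum_(k < N) dft b k * conjc (dft b k).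
  apply: ler_sum => k _.
  have hb : 0 <= dft b k := le_trans (h0 k) (h1 k).
  by rewrite !conj_ge0 // ler_pM.
by rewrite !parseval lecR ler_pM2l // N_gt0.
Qed.
End F.

Lemma cnt1 (i n : nat) : (\sum_(j < n) (i == j) = (i < n))%N.
Proof.
elim: n => [|n IH]; first by rewrite big_ord0.
rewrite big_ord_recr /= IH ltnS.
case: (ltngtP i n) => h //=; by rewrite ?h ?(ltnW h) ?leqNgt ?h.
Qed.

Lemma cnt2 (n1 n2 : nat) : (\sum_(i < n1) (i < n2) = minn n1 n2)%N.
Proof.
elim: n1 => [|n IH]; first by rewrite big_ord0 min0n.
rewrite big_ord_recr /= IH.
case: (ltnP n n2) => h /=.
  by rewrite !minnE; lia.
by rewrite addn0 !minnE; lia.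
Qed.

Ltac fext := apply: functional_extensionality => ?;
  apply: functional_extensionality => ?; apply: functional_extensionality => ?.

Theorem lemma2p2 (R : realType) (n1 n2 n3 : nat)
  (A : tensor R n1 n2 n3) (U : tensor R n1 n1 n3) (S : tensor R n1 n2 n3)
  (V : tensor R n2 n2 n3) (i1 : 'I_n1) (j1 : 'I_n2) :
  val i1 = 0%N -> val j1 = 0%N ->
  (exists i j k, A i j k != 0) ->
  tSVD A U S V ->
  let s := ttube S i1 j1 in
  let M1 := tprod (tprod (lslice U i1) (fun a b k => s a b k / tfro s))
                  (tconj (lslice V j1)) in
  tfro A / Num.sqrt (minn n1 n2)%:R <= tinner M1 A.
Proof.
case: n3 A U S V => [|m] A U S V hi hj [i0 [j0 [k0 _]]];
  first by case: k0 => ? hk; exfalso; move: hk; rewrite ltn0.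
rewrite /tSVD /torthogonal => -[[hU1 hU2] [hV1 hV2] hSd hA [hpos hord]].
set s := ttube S i1 j1.
set M1 := tprod (tprod _ _) _.
have eA : A = tprod (tprod U S) (tconj V) by fext; apply: hA.
have eU : tprod (tconj U) U = @tid R n1 m.+1 by fext; apply: hU1.
have eV : tprod (tconj V) V = @tid R n2 m.+1 by fext; apply: hV1.
have eAV : tprod A V = tprod U S.
  by fext; rewrite eA tprodA eV tprod_id.
set sn := tfro s.
set T := tinner s s.
have T0 : 0 <= T.
  by apply: sumr_ge0 => ? _; apply: sumr_ge0 => ? _; apply: sumr_ge0 => ? _;
     rewrite -expr2 sqr_ge0.
have hsn : sn ^+ 2 = T by rewrite /sn /tfro sqr_sqrtr.
have hM : tinner M1 A = sn.
  rewrite /M1 tinnerR tconjK.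
  have e1 : tprod A (lslice V j1) = lslice (tprod U S) j1.
    fext; rewrite -eAV; reflexivity.
  rewrite e1 tinnerL.
  have e2 : tprod (tconj (lslice U i1)) (lslice (tprod U S) j1) = s.
    fext; rewrite /s /ttube -[RHS](@tid_prod _ _ _ _ S) -eU tprodA; reflexivity.
  rewrite e2.
  have -> : tinner (fun a b k => s a b k / sn) s = T / sn.
    rewrite /tinner /T !mulr_suml; apply: eq_bigr => ? _; rewrite !mulr_suml.
    apply: eq_bigr => ? _; rewrite mulr_suml; apply: eq_bigr => ? _.
    by rewrite mulrAC.
  rewrite -hsn; have [->|sn0] := eqVneq sn 0; first by rewrite expr2 !mul0r.
  by rewrite expr2 mulfK.
have hA2 : tinner A A = tinner S S.
  rewrite {1}eA tinnerR tconjK eAV tinnerL -tprodAf eU.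
  by congr tinner; fext; rewrite tid_prod.
have hS2 : tinner S S <= (minn n1 n2)%:R * T.
  have hT : T = \sum_(k < m.+1) S i1 j1 k ^+ 2.
    by rewrite /T /tinner !big_ord1; apply: eq_bigr => k _; rewrite expr2.
  apply: (@le_trans _ _ (\sum_(i < n1) \sum_(j < n2) ((val i == val j)%:R * T))).
    apply: ler_sum => i _; apply: ler_sum => j _.
    have [eij|nij] := eqVneq (val i) (val j).
      rewrite ?eqxx ?mul1r hT.
      under eq_bigr do rewrite -expr2.
      apply: (@dft_le R m (fun k => S i j k) (fun k => S i1 j1 k)).
        by move=> k; apply: hpos.
      by move=> k; apply: (hord i1 i j1 j k) => //; rewrite ?hi ?hj.
    rewrite mul0r big1 // => k _.
    by rewrite hSd ?mulr0 //; apply/eqP.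
  under eq_bigr do rewrite -mulr_suml.
  rewrite -mulr_suml.
  rewrite -cnt2 natr_sum; apply: ler_wpM2r => //.
  rewrite le_eqVlt; apply/orP; left; apply/eqP; apply: eq_bigr => i _.
  by rewrite -cnt1 natr_sum.
rewrite hM.
have sn0 : 0 <= sn by rewrite /sn /tfro sqrtr_ge0.
have [mz|mpos] := eqVneq (minn n1 n2) 0%N.
  by rewrite mz sqrtr0 invr0 mulr0.
have mp : 0 < Num.sqrt (minn n1 n2)%:R :> R.
  by rewrite sqrtr_gt0 ltr0n lt0n.
rewrite ler_pdivrMr // /tfro hA2 /sn /tfro -/T mulrC -sqrtrM ?ler0n //.
by rewrite ler_sqrt // mulr_ge0 ?ler0n.
Qed.
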